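(* Assume Conditions (A), (P) and (Ah) from the context. Then (i) $\|A_hP_hA^{-1}\|_{\mathcal L(H)}\le C$ and (ii) $\|A_{h,\ell}A_h^{-1}P_h\|_{\mathcal L(H)}\le C$ for $\ell\in\{1,2\}$, with $C$ independent of $h$.
   Context: $(H,(\cdot,\cdot)_H,\|\cdot\|_H)$ is a real Hilbert space with complexification $H_{\mathbb C}$; $C$ denotes generic constants independent of $h$. Condition (A): $A:\mathrm{dom}(A)\subset H\to H$ and $A_\ell:\mathrm{dom}(A_\ell)\subset H\to H$ ($\ell=1,2$) are linear with $A=A_1+A_2$ on $\mathrm{dom}(A_1)\cap\mathrm{dom}(A_2)\subseteq\mathrm{dom}(A)$; $A$ is densely defined, positive and sectorial: there is $\varphi\in(0,\pi/2)$ such that $0$ and $S_\varphi=\{\lambda\in\mathbb C:\varphi<|\arg\lambda|\le\pi\}$ lie in the resolvent set and $\|(A-\lambda I)^{-1}\|_{\mathcal L(H_{\mathbb C})}\le C/|\lambda|$ on $S_\varphi$; $A_\ell A^{-1}$ is a well-defined bounded operator on $H$. Condition (P): $V_h\subset H$ ($h\in I\subset(0,\infty)$) are finite-dimensional subspaces and $P_h:H\to V_h$ bounded projections with $\|(I-P_h)v\|_H\le Ch^2\|Av\|_H$ for $v\in\mathrm{dom}(A)$. Condition (Ah): $V_h$ carries an inner product with norm $\|\cdot\|_{V_h}$, $\|v_h\|_H\le C\|v_h\|_{V_h}$, and $A_h,A_{h,1},A_{h,2}\in\mathcal L(V_h)$ satisfy for all $v_h,w_h\in V_h$, $\ell=1,2$: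 (a) $(A_hv_h,v_h)_H\ge C\|v_h\|^2_{V_h}$; (b) $|(A_hv_h,w_h)_H|\le C\|v_h\|_{V_h}\|w_h\|_{V_h}$; (c) $A_h=A_{h,1}+A_{h,2}$; (d) $(A_{h,\ell}v_h,v_h)_H\ge0$; (e) $\|A_{h,\ell}P_h\|_{\mathcal L(H)}\le Ch^{-2}$; (f) $\|(P_hA_\ell-A_{h,\ell}P_h)v\|_H\le C\|Av\|_H$ for $v\in\mathrm{dom}(A)$; (g) $\|A^{-1}-A_h^{-1}P_h\|_{\mathcal L(H)}\le Ch^2$. Operators on $V_h$ composed with $P_h$ are regarded as operators on $H$; $\|\cdot\|_{\mathcal L(H)}$ is the operator norm with respect to $\|\cdot\|_H$. *)

(* Defs.v *)
From HB Require Import structures.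
From mathcomp Require Import all_boot all_order all_algebra.
From mathcomp Require Import all_classical all_reals.
From mathcomp Require Import topology normedtype trigo.
Set Implicit Arguments. Unset Strict Implicit. Unset Printing Implicit Defensive.
Import Order.TTheory GRing.Theory Num.Theory.
Import numFieldNormedType.Exports.
Local Open Scope classical_set_scope.
Local Open Scope ring_scope.

Definition inner_product {R : realType} {H : normedModType R} (ip : H -> H -> R) :=
  [/\ forall (a : R) (x y z : H), ip (a *: x + y) z = a * ip x z + ip y z,
      forall x y, ip x y = ip y x &
      forall x, ip x x = `|x| ^+ 2].

Definition subspace {R : realType} {H : normedModType R} (D : set H) :=
  D 0 /\ forall (a : R) x y, D x -> D y -> D (a *: x + y).

(* T is a linear operator with domain D (values outside D are irrelevant) *)
Definition lin_on {R : realType} {H : normedModType R} (D : set H) (T : H -> H) :=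
  subspace D /\ forall (a : R) x y, D x -> D y -> T (a *: x + y) = a *: T x + T y.

Definition fin_dim_subspace {R : realType} {H : normedModType R} (V : set H) :=
  subspace V /\ exists s : seq H,
    forall x, V x <-> exists c : 'I_(size s) -> R, x = \sum_(i < size s) c i *: nth 0 s i.

Definition bounded_op {R : realType} {H : normedModType R} (T : H -> H) :=
  exists C : R, forall x, `|T x| <= C * `|x|.

(* the inverse of T : D -> (codomain), chosen classically; it is the genuine
   inverse whenever T is a bijection from D onto the whole space *)
Definition inv_on {T : choiceType} (x0 : T) (D : set T) (f : T -> T) (y : T) : T :=
  xget x0 [set x | D x /\ f x = y].

(* ---- complexification H_C = H + iH, represented as pairs (u, w) = u + i w ---- *)
Definition normC {R : realType} {H : normedModType R} (p : H * H) : R :=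
  Num.sqrt (`|p.1| ^+ 2 + `|p.2| ^+ 2).

Definition domC {R : realType} {H : normedModType R} (D : set H) : set (H * H) :=
  [set p | D p.1 /\ D p.2].

(* A_C - lambda I with lambda = a + i b *)
Definition shiftC {R : realType} {H : normedModType R} (A : H -> H) (a b : R)
  (p : H * H) : H * H :=
  (A p.1 - a *: p.1 + b *: p.2, A p.2 - a *: p.2 - b *: p.1).

Definition in_resolventC {R : realType} {H : normedModType R} (D : set H) (A : H -> H)
  (a b : R) :=
  [/\ forall y, exists x, domC D x /\ shiftC A a b x = y,
      forall x y, domC D x -> domC D y -> shiftC A a b x = shiftC A a b y -> x = y &
      exists C : R, forall y,
        normC (inv_on (0, 0) (domC D) (shiftC A a b) y) <= C * normC y].

(* lambda = a + i b lies in S_phi = {phi < |arg lambda| <= pi} *)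
Definition sector {R : realType} (phi a b : R) :=
  (a, b) <> (0, 0) /\ a < cos phi * Num.sqrt (a ^+ 2 + b ^+ 2).

Definition condA {R : realType} {H : completeNormedModType R} (ip : H -> H -> R)
  (domA : set H) (A : H -> H) (dom1 : set H) (A1 : H -> H) (dom2 : set H) (A2 : H -> H) :=
  lin_on domA A /\ lin_on dom1 A1 /\ lin_on dom2 A2 /\
      (forall x, dom1 x -> dom2 x -> domA x /\ A x = A1 x + A2 x) /\
      closure domA = setT /\
      (forall v, domA v -> 0 <= ip (A v) v) /\
      in_resolventC domA A 0 0 /\
      (exists phi : R, [/\ 0 < phi, phi < pi / 2 &
         exists C : R, forall a b, sector phi a b ->
           in_resolventC domA A a b /\
           forall y, normC (inv_on (0, 0) (domC domA) (shiftC A a b) y)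
                     <= C / Num.sqrt (a ^+ 2 + b ^+ 2) * normC y]) /\
      ((forall f, dom1 (inv_on 0 domA A f)) /\ bounded_op (fun f => A1 (inv_on 0 domA A f)) /\
       (forall f, dom2 (inv_on 0 domA A f)) /\ bounded_op (fun f => A2 (inv_on 0 domA A f))).

Definition condP {R : realType} {H : completeNormedModType R}
  (domA : set H) (A : H -> H) (I : set R) (V : R -> set H) (P : R -> H -> H) :=
  [/\ (forall h, I h -> 0 < h),
      (forall h, I h -> fin_dim_subspace (V h)),
      (forall h, I h -> [/\ lin_on setT (P h), (forall x, V h (P h x)),
                            (forall v, V h v -> P h v = v) & bounded_op (P h)]) &
      exists C : R, forall h, I h -> forall v, domA v ->
        `|v - P h v| <= C * h ^+ 2 * `|A v|].

Definition normV {R : realType} {H : normedModType R} (ipV : H -> H -> R) (v : H) : R :=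
  Num.sqrt (ipV v v).

Definition inner_product_on {R : realType} {H : normedModType R} (V : set H)
  (ipV : H -> H -> R) :=
  [/\ forall (a : R) x y z, V x -> V y -> V z -> ipV (a *: x + y) z = a * ipV x z + ipV y z,
      forall x y, V x -> V y -> ipV x y = ipV y x,
      forall x, V x -> 0 <= ipV x x &
      forall x, V x -> ipV x x = 0 -> x = 0].

Definition op_on {R : realType} {H : normedModType R} (V : set H) (T : H -> H) :=
  lin_on V T /\ forall v, V v -> V (T v).

Definition condAh {R : realType} {H : completeNormedModType R} (ip : H -> H -> R)
  (domA : set H) (A : H -> H) (A1 : H -> H) (A2 : H -> H)
  (I : set R) (V : R -> set H) (P : R -> H -> H) (ipV : R -> H -> H -> R)
  (Ah A1h A2h : R -> H -> H) :=
  (forall h, I h -> inner_product_on (V h) (ipV h)) /\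
      (exists C : R, forall h, I h -> forall v, V h v -> `|v| <= C * normV (ipV h) v) /\
      (forall h, I h -> [/\ op_on (V h) (Ah h), op_on (V h) (A1h h) & op_on (V h) (A2h h)]) /\
      (* (a) *)
      (exists2 C : R, 0 < C & forall h, I h -> forall v, V h v ->
         C * normV (ipV h) v ^+ 2 <= ip (Ah h v) v) /\
      (* (b) *)
      (exists C : R, forall h, I h -> forall v w, V h v -> V h w ->
         `|ip (Ah h v) w| <= C * normV (ipV h) v * normV (ipV h) w) /\
      (forall h, I h -> forall v, V h v -> Ah h v = A1h h v + A2h h v) /\
      (forall h, I h -> forall v, V h v -> 0 <= ip (A1h h v) v /\ 0 <= ip (A2h h v) v) /\
      (* (e) *)
      (exists C : R, forall h, I h -> forall x,
         `|A1h h (P h x)| <= C / h ^+ 2 * `|x| /\ `|A2h h (P h x)| <= C / h ^+ 2 * `|x|) /\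
      (* (f) *)
      (exists C : R, forall h, I h -> forall v, domA v ->
         `|P h (A1 v) - A1h h (P h v)| <= C * `|A v| /\
         `|P h (A2 v) - A2h h (P h v)| <= C * `|A v|) /\
      (* (g) *)
      (exists C : R, forall h, I h -> forall x,
         `|inv_on 0 domA A x - inv_on 0 (V h) (Ah h) (P h x)| <= C * h ^+ 2 * `|x|).

(* Main.v *)
Require Import Defs.
From HB Require Import structures.
From mathcomp Require Import all_boot all_order all_algebra.
From mathcomp Require Import all_classical all_reals.
From mathcomp Require Import topology normedtype trigo.
From mathcomp Require Import ring lra.
Import Order.TTheory GRing.Theory Num.Theory.
Import numFieldNormedType.Exports.
Local Open Scope classical_set_scope.
Local Open Scope ring_scope.

Lemma lin0 (R : realType) (H : normedModType R) (D : set H) (T : H -> H) :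
  lin_on D T -> T 0 = 0.
Proof.
move=> [[D0 _] HT]; have := HT 1 0 0 D0 D0.
rewrite !scale1r addr0 => E.
by apply: (@addrI _ (T 0)); rewrite addr0 -E.
Qed.

Lemma A_inv_spec (R : realType) (H : normedModType R) (D : set H) (A : H -> H) :
  lin_on D A -> in_resolventC D A 0 0 ->
  (forall x, D (inv_on 0 D A x) /\ A (inv_on 0 D A x) = x) /\
  (forall r, D r -> inv_on 0 D A (A r) = r).
Proof.
move=> lA [Hsurj Hinj _]; have A0 := @lin0 _ _ _ _ lA.
have D0 : D 0 by case: lA => [[]].
split.
  move=> x; apply: (@xgetPex _ 0 [set r | D r /\ A r = x]).
  have [p [[Dp1 Dp2] Hp]] := Hsurj (x, 0).
  exists p.1; split => //.
  by move: Hp => [+ _]; rewrite !scale0r subr0 addr0.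
move=> r Dr; apply: xget_unique; first by [].
move=> y [Dy Hy].
have := Hinj (y, 0) (r, 0).
rewrite /domC /shiftC /= !scale0r !subr0 !addr0 Hy.
by move=> /(_ (conj Dy D0) (conj Dr D0) erefl) [].
Qed.

Lemma le_max0 (R : realType) (a C b : R) : 0 <= b -> a <= C * b -> a <= Num.max C 0 * b.
Proof.
move=> b0 h; apply: (le_trans h); apply: ler_wpM2r => //.
by rewrite le_max lexx.
Qed.

Lemma resolvent_spec (R : realType) (H : normedModType R) (D : set H) (A : H -> H)
  (phi Cs : R) :
  0 < phi -> phi < pi / 2 ->
  (forall a b, sector phi a b ->
           in_resolventC D A a b /\
           forall y, normC (inv_on (0, 0) (domC D) (shiftC A a b) y)
                     <= Cs / Num.sqrt (a ^+ 2 + b ^+ 2) * normC y) ->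
  forall mu, 0 < mu -> forall y, exists r, D r /\ A r + mu *: r = y /\
     `|r| <= Num.max Cs 0 / mu * `|y|.
Proof.
move=> phi0 phipi Hs mu mu0 y.
have sec : sector phi (- mu) 0.
  split.
    by case=> /eqP; rewrite oppr_eq0 gt_eqF.
  have c0 : 0 < cos phi.
    apply: cos_gt0_pihalf; apply/andP; split => //.
    apply: lt_trans phi0; rewrite oppr_lt0; apply: divr_gt0 => //; exact: pi_gt0.
  rewrite expr0n /= addr0 sqrtr_sqr normrN gtr0_norm //.
  have : 0 < cos phi * mu by exact: mulr_gt0.
  lra.
have [[Hsurj _ _] Hb] := Hs _ _ sec.
set q := inv_on (0, 0) (domC D) (shiftC A (- mu) 0) (y, 0).
have [Dq Hq] : domC D q /\ shiftC A (- mu) 0 q = (y, 0).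
  apply: (@xgetPex _ (0,0) [set x | domC D x /\ shiftC A (- mu) 0 x = (y,0)]).
  by have [p Hp] := Hsurj (y, 0); exists p.
exists q.1; split; first by case: Dq.
split.
  by move: Hq => [+ _]; rewrite scale0r addr0 scaleNr opprK.
have := Hb (y, 0); rewrite -/q /normC /= normr0 expr0n /= addr0 sqrtr_sqr.
rewrite addr0 sqrtr_sqr normr_id normrN (gtr0_norm mu0) => hb.
have h1 : `|q.1| <= Num.sqrt (`|q.1| ^+ 2 + `|q.2| ^+ 2).
  rewrite -{1}(normr_id q.1) -sqrtr_sqr; apply: ler_wsqrtr.
  by rewrite lerDl sqr_ge0.
apply: (le_trans h1); apply: (le_trans hb).
rewrite -mulrA -[X in _ <= X]mulrA; apply: ler_wpM2r.
  by rewrite mulr_ge0 // invr_ge0 ltW.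
by rewrite le_max lexx.
Qed.

Lemma linD (R : realType) (H : normedModType R) (D : set H) (T : H -> H) x y :
  lin_on D T -> D x -> D y -> T (x + y) = T x + T y.
Proof. by move=> [_ HT] Dx Dy; have := HT 1 x y Dx Dy; rewrite !scale1r. Qed.

Lemma linZ (R : realType) (H : normedModType R) (D : set H) (T : H -> H) a x y :
  lin_on D T -> D x -> D y -> T (a *: x + y) = a *: T x + T y.
Proof. by move=> [_ HT] Dx Dy; exact: HT. Qed.

Theorem lemma4p1 (R : realType) (H : completeNormedModType R) (ip : H -> H -> R)
  (domA : set H) (A : H -> H) (dom1 : set H) (A1 : H -> H) (dom2 : set H) (A2 : H -> H)
  (I : set R) (V : R -> set H) (P : R -> H -> H) (ipV : R -> H -> H -> R)
  (Ah A1h A2h : R -> H -> H) :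
  inner_product ip ->
  condA ip domA A dom1 A1 dom2 A2 ->
  condP domA A I V P ->
  condAh ip domA A A1 A2 I V P ipV Ah A1h A2h ->
  exists C : R, forall h, I h -> forall x : H,
    [/\ `|Ah h (P h (inv_on 0 domA A x))| <= C * `|x|,
        `|A1h h (inv_on 0 (V h) (Ah h) (P h x))| <= C * `|x| &
        `|A2h h (inv_on 0 (V h) (Ah h) (P h x))| <= C * `|x|].
Proof.
move=> _ [lA [l1 [l2 [hsum [_ [_ [res0 [[phi [phi0 phipi [Cs Hs]]] [d1 [[C1 b1] [d2 [C2 b2]]]]]]]]]]]].
move=> [hpos _ HP [Cp HCp]].
move=> [_ [_ [hops [_ [_ [hc [_ [[Ce HCe] [[Cf HCf] [Cg HCg]]]]]]]]]].
have [Ainv Ainj] := @A_inv_spec _ _ _ _ lA res0.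
have Res := @resolvent_spec _ _ _ _ _ _ phi0 phipi Hs.
set Kr := Num.max Cs 0.
have Kr0 : 0 <= Kr by rewrite le_max lexx orbT.
set Kp := Num.max Cp 0.
have Kp0 : 0 <= Kp by rewrite le_max lexx orbT.
set Ke := Num.max Ce 0.
have Ke0 : 0 <= Ke by rewrite le_max lexx orbT.
set Kf := Num.max Cf 0.
have Kf0 : 0 <= Kf by rewrite le_max lexx orbT.
set Kg := Num.max Cg 0.
have Kg0 : 0 <= Kg by rewrite le_max lexx orbT.
set K1 := Num.max C1 0.
have K10 : 0 <= K1 by rewrite le_max lexx orbT.
set K2 := Num.max C2 0.
have K20 : 0 <= K2 by rewrite le_max lexx orbT.
have {}HCp : forall h, I h -> forall v, domA v -> `|v - P h v| <= Kp * (h ^+ 2 * `|A v|).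
  move=> h hI v Dv; apply: le_max0; first by rewrite mulr_ge0 // sqr_ge0.
  by rewrite mulrA; exact: HCp.
have HCe1 : forall h, I h -> forall x, `|A1h h (P h x)| <= Ke * ((h ^+ 2)^-1 * `|x|).
  move=> h hI x; apply: le_max0; first by rewrite mulr_ge0 // invr_ge0 sqr_ge0.
  by rewrite mulrA; case: (HCe h hI x).
have HCe2 : forall h, I h -> forall x, `|A2h h (P h x)| <= Ke * ((h ^+ 2)^-1 * `|x|).
  move=> h hI x; apply: le_max0; first by rewrite mulr_ge0 // invr_ge0 sqr_ge0.
  by rewrite mulrA; case: (HCe h hI x).
have HCf1 : forall h, I h -> forall v, domA v -> `|P h (A1 v) - A1h h (P h v)| <= Kf * `|A v|.
  by move=> h hI v Dv; apply: le_max0 => //; case: (HCf h hI v Dv).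
have HCf2 : forall h, I h -> forall v, domA v -> `|P h (A2 v) - A2h h (P h v)| <= Kf * `|A v|.
  by move=> h hI v Dv; apply: le_max0 => //; case: (HCf h hI v Dv).
have {}HCg : forall h, I h -> forall x,
   `|inv_on 0 domA A x - inv_on 0 (V h) (Ah h) (P h x)| <= Kg * (h ^+ 2 * `|x|).
  move=> h hI x; apply: le_max0; first by rewrite mulr_ge0 // sqr_ge0.
  by rewrite mulrA; exact: HCg.
have {}b1 : forall f, `|A1 (inv_on 0 domA A f)| <= K1 * `|f|.
  by move=> f; apply: le_max0.
have {}b2 : forall f, `|A2 (inv_on 0 domA A f)| <= K2 * `|f|.
  by move=> f; apply: le_max0.
have linP : forall h, I h -> lin_on setT (P h) by move=> h hI; case: (HP h hI).
set KP := Kr + Kp * (1 + Kr) + 2 * (Ke * Kr + Kf * (1 + Kr)).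
have KP0 : 0 <= KP.
  have t1 : 0 <= Kp * (1 + Kr) by rewrite mulr_ge0 ?addr_ge0.
  have t2 : 0 <= Ke * Kr by rewrite mulr_ge0.
  have t3 : 0 <= Kf * (1 + Kr) by rewrite mulr_ge0 ?addr_ge0.
  rewrite /KP; lra.
have Pb : forall h, I h -> forall y, `|P h y| <= KP * `|y|.
  move=> h hI y; have h0 := hpos h hI.
  set mu := (h ^+ 2)^-1.
  have h20 : 0 < h ^+ 2 by rewrite exprn_gt0.
  have mu0 : 0 < mu by rewrite invr_gt0.
  have muh : mu * h ^+ 2 = 1 by rewrite mulVf // gt_eqF.
  have [r [Dr [Er Br]]] := Res mu mu0 y.
  have F1 : mu * `|r| <= Kr * `|y|.
    have -> : Kr * `|y| = mu * (Kr / mu * `|y|) by field; rewrite gt_eqF.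
    by rewrite ler_wpM2l // ltW.
  have F2 : `|A r| <= `|y| + mu * `|r|.
    have -> : A r = y - mu *: r by rewrite -Er addrK.
    by apply: (le_trans (ler_normB _ _)); rewrite normrZ gtr0_norm.
  have F3 : mu * `|P h r| <= mu * `|r| + Kp * `|A r|.
    have -> : P h r = r - (r - P h r) by rewrite opprB addrC subrK.
    have := HCp h hI r Dr.
    have := ler_normB r (r - P h r).
    have : 0 < mu by [].
    move=> m0 a b.
    have : mu * `|r - (r - P h r)| <= mu * (`|r| + Kp * (h ^+ 2 * `|A r|)).
      by apply: ler_wpM2l; [exact: ltW | apply: (le_trans a); rewrite lerD2l].
    rewrite mulrDr.
    have -> : mu * (Kp * (h ^+ 2 * `|A r|)) = Kp * `|A r|.
      by rewrite /mu; field; rewrite gt_eqF.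
    by [].
  have Er2 := Ainj r Dr.
  have D1r : dom1 r by rewrite -Er2; exact: d1.
  have D2r : dom2 r by rewrite -Er2; exact: d2.
  have [_ Esum] := hsum r D1r D2r.
  have F5 : forall (T : H -> H) (Th : H -> H),
      `|P h (T r) - Th (P h r)| <= Kf * `|A r| ->
      `|Th (P h r)| <= Ke * ((h ^+ 2)^-1 * `|r|) ->
      `|P h (T r)| <= Ke * (mu * `|r|) + Kf * `|A r|.
    move=> T Th a b.
    rewrite -[P h (T r)](subrK (Th (P h r))).
    apply: (le_trans (ler_normD _ _)); rewrite addrC; exact: lerD.
  have G1 := F5 _ _ (HCf1 h hI r Dr) (HCe1 h hI r).
  have G2 := F5 _ _ (HCf2 h hI r Dr) (HCe2 h hI r).
  have EP : P h y = mu *: P h r + (P h (A1 r) + P h (A2 r)).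
    rewrite -Er Esum addrC (@linZ _ _ _ _ _ _ _ (linP h hI)) //.
    by rewrite (@linD _ _ _ _ _ _ (linP h hI)).
  have G3 : `|P h y| <= mu * `|P h r| + (`|P h (A1 r)| + `|P h (A2 r)|).
    rewrite EP; apply: (le_trans (ler_normD _ _)).
    rewrite normrZ (gtr0_norm mu0) lerD2l; exact: ler_normD.
  have H1 : Kp * `|A r| <= Kp * ((1 + Kr) * `|y|).
    by rewrite ler_wpM2l //; lra.
  have H2 : Ke * (mu * `|r|) <= Ke * (Kr * `|y|) by rewrite ler_wpM2l.
  have H3 : Kf * `|A r| <= Kf * ((1 + Kr) * `|y|).
    by rewrite ler_wpM2l //; lra.
  rewrite /KP.
  lra.
exists (KP * (K1 + K2) + 2 * Kf + Ke * Kg) => h hI x.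
have [Dux Aux] := Ainv x.
set u := inv_on 0 domA A x.
have D1u : dom1 u by exact: d1.
have D2u : dom2 u by exact: d2.
have V0 : V h 0 by case: (hops h hI) => [[[[]]]].
have [[linAh VAh] [lin1h V1h] [lin2h V2h]] := hops h hI.
have [_ PV Pfix _] := HP h hI.
have Q : forall (T : H -> H) (Th : H -> H) (KT : R),
    `|P h (T u) - Th (P h u)| <= Kf * `|A u| ->
    `|T u| <= KT * `|x| ->
    `|Th (P h u)| <= KP * KT * `|x| + Kf * `|x|.
  move=> T Th KT a b.
  rewrite -[Th (P h u)](subrK (P h (T u))).
  apply: (le_trans (ler_normD _ _)).
  rewrite distrC Aux in a.
  rewrite [X in _ <= X]addrC; apply: lerD => //.
  apply: (le_trans (Pb h hI _)).
  by rewrite -mulrA ler_wpM2l.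
have h0 := hpos h hI.
have h20 : 0 < h ^+ 2 by rewrite exprn_gt0.
have Q1 := Q _ _ _ (HCf1 h hI u Dux) (b1 x).
have Q2 := Q _ _ _ (HCf2 h hI u Dux) (b2 x).
have nx : 0 <= `|x| by [].
have t1 : 0 <= Ke * Kg * `|x| by rewrite !mulr_ge0.
set w := inv_on 0 (V h) (Ah h) (P h x).
have Vw : V h w.
  rewrite /w /inv_on; case: xgetP => [? _ []|] //.
have W : `|w - u| <= Kg * (h ^+ 2 * `|x|) by rewrite distrC; exact: HCg.
have W2 : Ke * ((h ^+ 2)^-1 * `|w - u|) <= Ke * Kg * `|x|.
  apply: (le_trans (ler_wpM2l Ke0 (ler_wpM2l _ W))).
    by rewrite invr_ge0 ltW.
  have -> : Ke * ((h ^+ 2)^-1 * (Kg * (h ^+ 2 * `|x|))) = Ke * Kg * `|x|.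
    by field; rewrite gt_eqF.
  by [].
have EPw : P h w = P h (w - u) + P h u.
  by rewrite -(@linD _ _ _ _ _ _ (linP h hI)) // subrK.
split.
- rewrite (hc h hI _ (PV u)).
  apply: (le_trans (ler_normD _ _)).
  have t2 : 0 <= KP * K1 * `|x| by rewrite !mulr_ge0.
  have t3 : 0 <= KP * K2 * `|x| by rewrite !mulr_ge0.
  have -> : (KP * (K1 + K2) + 2 * Kf + Ke * Kg) * `|x| =
     (KP * K1 * `|x| + Kf * `|x|) + (KP * K2 * `|x| + Kf * `|x|) + Ke * Kg * `|x|.
    by ring.
  lra.
- rewrite -(Pfix w Vw) EPw (@linD _ _ _ _ _ _ lin1h) ?PV //.
  apply: (le_trans (ler_normD _ _)).
  have W3 := HCe1 h hI (w - u).
  have t3 : 0 <= KP * K2 * `|x| by rewrite !mulr_ge0.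
  have t4 : 0 <= Kf * `|x| by rewrite !mulr_ge0.
  have -> : (KP * (K1 + K2) + 2 * Kf + Ke * Kg) * `|x| =
     Ke * Kg * `|x| + (KP * K1 * `|x| + Kf * `|x|) + (KP * K2 * `|x| + Kf * `|x|).
    by ring.
  lra.
- rewrite -(Pfix w Vw) EPw (@linD _ _ _ _ _ _ lin2h) ?PV //.
  apply: (le_trans (ler_normD _ _)).
  have W3 := HCe2 h hI (w - u).
  have t3 : 0 <= KP * K1 * `|x| by rewrite !mulr_ge0.
  have t4 : 0 <= Kf * `|x| by rewrite !mulr_ge0.
  have -> : (KP * (K1 + K2) + 2 * Kf + Ke * Kg) * `|x| =
     Ke * Kg * `|x| + (KP * K2 * `|x| + Kf * `|x|) + (KP * K1 * `|x| + Kf * `|x|).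
    by ring.
  lra.
Qed.
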